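(* Let $G=GL_n(\mathbb C)$, $\mathfrak g=\mathfrak{gl}_n(\mathbb C)$, $v_0\in\mathbb C^n$ nonzero, $P=\{g\in G:gv_0=v_0\}$ with Lie algebra $\mathfrak p=\{A\in\mathfrak g:Av_0=0\}$, and let $\mathfrak p^\perp$ be the orthogonal of $\mathfrak p$ for the form $(A,B)\mapsto\mathrm{trace}(AB)$. Let $X$ be a regular nilpotent element of $\mathfrak g$ (a single Jordan block). If the orbit $P.X$ (under conjugation) is not open dense in $G.X$, then there exists a semisimple $Y\in\mathfrak g$ not in the center of $\mathfrak g$ such that $[X,Y]\in\mathfrak p^\perp$. *)

(* Defs.v *)
(* C is any numClosedFieldType (e.g. the complex numbers);
   matrices carry the entrywise-norm (Euclidean) topology. *)
From HB Require Import structures.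
From mathcomp Require Import all_boot all_order all_algebra.
Set Implicit Arguments. Unset Strict Implicit. Unset Printing Implicit Defensive.
Import Order.TTheory GRing.Theory Num.Theory.
Local Open Scope ring_scope.

Section Defs.
Variables (C : numClosedFieldType) (n : nat).

Definition conjmx (g X : 'M[C]_n) : 'M[C]_n := g *m X *m invmx g.

Definition GL_orbit (X : 'M[C]_n) : 'M[C]_n -> Prop :=
  fun A => exists2 g : 'M[C]_n, g \in unitmx & A = conjmx g X.

Definition stabP (v0 : 'cV[C]_n) (g : 'M[C]_n) : Prop :=
  g \in unitmx /\ g *m v0 = v0.

Definition P_orbit (v0 : 'cV[C]_n) (X : 'M[C]_n) : 'M[C]_n -> Prop :=
  fun A => exists2 g : 'M[C]_n, stabP v0 g & A = conjmx g X.

Definition lie_p (v0 : 'cV[C]_n) (A : 'M[C]_n) : Prop := A *m v0 = 0.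

Definition lie_p_perp (v0 : 'cV[C]_n) (B : 'M[C]_n) : Prop :=
  forall A : 'M[C]_n, lie_p v0 A -> \tr (A *m B) = 0.

Definition mx_close (e : C) (A B : 'M[C]_n) : Prop :=
  forall i j, `|A i j - B i j| < e.

Definition open_in (S T : 'M[C]_n -> Prop) : Prop :=
  (forall A, S A -> T A) /\
  forall A, S A -> exists2 e : C, 0 < e &
    forall B, T B -> mx_close e B A -> S B.

Definition dense_in (S T : 'M[C]_n -> Prop) : Prop :=
  forall A, T A -> forall e : C, 0 < e -> exists2 B, S B & mx_close e B A.

Definition nilJordan : 'M[C]_n := \matrix_(i, j) (j == i.+1 :> nat)%:R.

Definition regular_nilpotent (X : 'M[C]_n) : Prop :=
  exists2 g : 'M[C]_n, g \in unitmx & X = conjmx g nilJordan.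

(* semisimple = diagonalizable (C algebraically closed) *)
Definition semisimple (Y : 'M[C]_n) : Prop :=
  exists2 g : 'M[C]_n, g \in unitmx & is_diag_mx (conjmx g Y).

Definition central (Y : 'M[C]_n) : Prop := is_scalar_mx Y.

Definition lie_bracket (X Y : 'M[C]_n) : 'M[C]_n := X *m Y - Y *m X.

End Defs.

(* Main.v *)
Require Import Defs.
From HB Require Import structures.
From mathcomp Require Import all_boot all_order all_algebra.
From Stdlib Require Import Lia.
Set Implicit Arguments. Unset Strict Implicit. Unset Printing Implicit Defensive.
Import Order.TTheory GRing.Theory Num.Theory.
Local Open Scope ring_scope.

Section Jordan.
Variables (C : numClosedFieldType) (n : nat).
Local Notation N := n.+1.
Local Notation J := (nilJordan C N).

Lemma inord_val (i : 'I_N) : inord (val i) = i :> 'I_N.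
Proof. by apply: val_inj; rewrite /= inordK. Qed.

Lemma Jv (w : 'cV[C]_N) (i : 'I_N) :
  (J *m w) i 0 = if (i.+1 < N)%N then w (inord i.+1) 0 else 0.
Proof.
rewrite mxE.
case: ifP => Hi.
  rewrite (bigD1 (Ordinal Hi)) //= big1 ?addr0.
    rewrite mxE /= eqxx mul1r.
    by rewrite -[Ordinal Hi]inord_val.
  move=> j Hj; rewrite mxE.
  case: eqP => [Ej|]; last by rewrite mul0r.
  by case/eqP: Hj; apply: val_inj; rewrite /= Ej.
rewrite big1 // => j _; rewrite mxE.
case: eqP => [Ej|]; last by rewrite mul0r.
by move: (ltn_ord j); rewrite Ej Hi.
Qed.

Lemma iterJ (k : nat) (w : 'cV[C]_N) (i : 'I_N) :
  (iter k (mulmx J) w) i 0 = if (i + k < N)%N then w (inord (i + k)) 0 else 0.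
Proof.
elim: k i => [|k IH] i /=.
  by rewrite addn0 ltn_ord inord_val.
rewrite Jv; case: ifP => Hi.
  rewrite IH inordK // addSn -addnS; case: ifP => // _.
case: ifP => // H; move: Hi; rewrite addnS ltnS in H.
by rewrite ltnS (leq_ltn_trans _ H) // leq_addr.
Qed.

Lemma iterJN (w : 'cV[C]_N) : iter N (mulmx J) w = 0.
Proof.
apply/matrixP => i j; rewrite (ord1 j) iterJ mxE.
by rewrite ltnNge leq_addl.
Qed.


Lemma inv_uniq (A B : 'M[C]_N) : A \in unitmx -> A *m B = 1%:M -> invmx A = B.
Proof. by move=> uA AB; rewrite -[invmx A]mulmx1 -AB mulmxA mulVmx // mul1mx. Qed.

Lemma invmx_mul (A B : 'M[C]_N) : A \in unitmx -> B \in unitmx ->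
  invmx (A *m B) = invmx B *m invmx A.
Proof.
move=> uA uB; apply: inv_uniq; first by rewrite unitmx_mul uA.
by rewrite -mulmxA (mulmxA B) mulmxV // mul1mx mulmxV.
Qed.

Lemma iter_conj (g A : 'M[C]_N) (w : 'cV[C]_N) k : g \in unitmx ->
  iter k (mulmx (g *m A *m invmx g)) w = g *m iter k (mulmx A) (invmx g *m w).
Proof.
move=> ug; elim: k => [|k IH] /=; first by rewrite mulKVmx.
by rewrite IH !mulmxA mulmxKV.
Qed.

Definition kr (A : 'M[C]_N) (w : 'cV[C]_N) : 'M[C]_N :=
  \matrix_(i, k) (iter (n - k) (mulmx A) w) i 0.

Lemma kr_conj (g A : 'M[C]_N) (w : 'cV[C]_N) : g \in unitmx ->
  kr (g *m A *m invmx g) w = g *m kr A (invmx g *m w).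
Proof.
move=> ug; apply/matrixP => i k; rewrite [LHS]mxE iter_conj // [LHS]mxE [RHS]mxE.
by refine (eq_bigr _ _) => j _; rewrite mxE.
Qed.

Lemma det_krJ (w : 'cV[C]_N) : \det (kr J w) = w ord_max 0 ^+ N.
Proof.
rewrite -det_tr det_trig.
  rewrite -[X in _ ^+ X]card_ord -prodr_const; apply: eq_bigr => i _.
  rewrite !mxE iterJ subnKC ?ltnS ?leq_ord //= leqnn.
  by rewrite -[ord_max]inord_val.
apply/is_trig_mxP => i j Hij; rewrite !mxE iterJ.
case: ifP => // H; exfalso; move: H.
rewrite ltnS => H; move: (leq_ord i) => Hi.
move: H Hi Hij; move: (val i) (val j) => a b; rewrite -minusE -plusE.
move=> /ssrnat.leP H /ssrnat.leP H1 /ssrnat.ltP H2; lia.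
Qed.

Lemma MJ (M : 'M[C]_N) (i k : 'I_N) :
  (M *m J) i k = if (0 < k)%N then M i (inord k.-1) else 0.
Proof.
rewrite mxE; case: ifP => Hk.
  have Hk1 : (k.-1 < N)%N by rewrite (leq_ltn_trans (leq_pred _)).
  rewrite (bigD1 (Ordinal Hk1)) //= big1 ?addr0.
    by rewrite mxE /= prednK // eqxx mulr1 -[Ordinal Hk1]inord_val.
  move=> j Hj; rewrite mxE.
  case: eqP => [Ej|]; last by rewrite mulr0.
  by case/eqP: Hj; apply: val_inj; rewrite /= Ej.
rewrite big1 // => j _; rewrite mxE.
case: eqP => [Ej|]; last by rewrite mulr0.
by move: Hk; rewrite Ej.
Qed.

Lemma kr_intertw (A : 'M[C]_N) (w : 'cV[C]_N) : iter N (mulmx A) w = 0 ->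
  A *m kr A w = kr A w *m J.
Proof.
move=> HN; apply/matrixP => i k; rewrite MJ.
have -> : (A *m kr A w) i k = (A *m iter (n - k) (mulmx A) w) i 0.
  by rewrite !mxE; refine (eq_bigr _ _) => j _; rewrite mxE.
case: ifP => Hk.
  rewrite [RHS]mxE inordK; last by rewrite (leq_ltn_trans (leq_pred _)).
  have E : (n - k.-1 = (n - k).+1)%N.
    move: (leq_ord k) Hk; move: (val k) => a; rewrite -minusE.
    move=> /ssrnat.leP H1 /ssrnat.ltP H2; lia.
  by rewrite E.
have -> : k = 0 :> nat by apply/eqP; rewrite eqn0Ngt Hk.
by rewrite subn0 -[A *m _]/(iter N (mulmx A) w) HN mxE.
Qed.

Lemma kr_last (A : 'M[C]_N) (w : 'cV[C]_N) : kr A w *m delta_mx ord_max 0 = w.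
Proof.
rewrite -colE; apply/matrixP => i j; rewrite (ord1 j) !mxE /=.
by rewrite subnn.
Qed.


Definition lip (F : 'M[C]_N -> C) (A : 'M[C]_N) :=
  exists2 L : C, 0 <= L & forall d B, 0 < d -> d <= 1 -> mx_close d B A ->
    `|F B - F A| <= L * d.

Lemma lip_const c A : lip (fun _ => c) A.
Proof.
by exists 0 => // d B _ _ _; rewrite subrr normr0 mul0r.
Qed.

Lemma lip_entry i j A : lip (fun B => B i j) A.
Proof.
exists 1 => // d B _ _ H; rewrite mul1r; exact: ltW (H i j).
Qed.

Lemma lip_add f g A : lip f A -> lip g A -> lip (fun B => f B + g B) A.
Proof.
move=> [Lf Lf0 Hf] [Lg Lg0 Hg]; exists (Lf + Lg); first exact: addr_ge0.
move=> d B d0 d1 H.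
rewrite opprD addrACA mulrDl.
by apply: le_trans (ler_normD _ _) _; apply: lerD; [apply: Hf|apply: Hg].
Qed.

Lemma lip_mul f g A : lip f A -> lip g A -> lip (fun B => f B * g B) A.
Proof.
move=> [Lf Lf0 Hf] [Lg Lg0 Hg].
exists (Lf * (`|g A| + Lg) + `|f A| * Lg).
  by rewrite addr_ge0 // mulr_ge0 // addr_ge0.
move=> d B d0 d1 H.
have E : f B * g B - f A * g A = (f B - f A) * g B + f A * (g B - g A).
  by rewrite mulrBl mulrBr addrA subrK.
rewrite E; apply: le_trans (ler_normD _ _) _; rewrite !normrM.
have HgB : `|g B| <= `|g A| + Lg.
  have -> : g B = g A + (g B - g A) by rewrite addrC subrK.
  apply: le_trans (ler_normD _ _) _; rewrite lerD2l.
  apply: le_trans (Hg d B d0 d1 H) _.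
  by rewrite -{2}[Lg]mulr1 ler_wpM2l.
rewrite mulrDl; apply: lerD.
  rewrite mulrAC; apply: ler_pM => //; exact: Hf.
rewrite -mulrA; apply: ler_wpM2l => //; exact: Hg.
Qed.

Lemma lip_ext f g A : (forall B, f B = g B) -> lip f A -> lip g A.
Proof.
by move=> E [L L0 H]; exists L => // d B d0 d1 HB; rewrite -!E; apply: H.
Qed.

Lemma lip_sumseq (I : Type) (r : seq I) (F : I -> 'M[C]_N -> C) A :
  (forall i, lip (F i) A) -> lip (fun B => \sum_(i <- r) F i B) A.
Proof.
move=> HF; elim: r => [|x r IH].
  by apply: lip_ext (lip_const 0 A) => B; rewrite big_nil.
apply: lip_ext (lip_add (HF x) IH) => B; by rewrite big_cons.
Qed.

Lemma lip_iter (v : 'cV[C]_N) k i A :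
  lip (fun B => (iter k (mulmx B) v) i 0) A.
Proof.
elim: k i => [|k IH] i /=; first exact: lip_const.
have H := @lip_sumseq _ (index_enum 'I_N) (fun j B => B i j * (iter k (mulmx B) v) j 0) A.
apply: lip_ext (H _) => [B|j]; first by rewrite mxE.
apply: lip_mul; [exact: lip_entry | exact: IH].
Qed.

Lemma pick_d (L a : C) : 0 <= L -> 0 < a ->
  exists d : C, [/\ 0 < d, d <= 1 & L * d < a].
Proof.
move=> L0 a0.
have a1 : 0 < 1 + a by rewrite addr_gt0.
have L1 : 0 < L + 1 by rewrite ltr_wpDl.
set c := a / (1 + a).
have c0 : 0 < c by rewrite divr_gt0.
have c1 : c < 1 by rewrite ltr_pdivrMr // mul1r ltrDr.
have ca : c < a.
  by rewrite ltr_pdivrMr // mulrDr mulr1 ltrDl mulr_gt0.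
exists (c / (L + 1)); split.
- by rewrite divr_gt0.
- apply: le_trans (ltW c1); rewrite ler_pdivrMr // ler_peMr ?(ltW c0) //.
  by rewrite lerDr.
- apply: le_lt_trans ca.
  apply: (@le_trans _ _ ((L + 1) * (c / (L + 1)))).
    by apply: ler_wpM2r; [rewrite divr_ge0 ?(ltW c0) ?(ltW L1) | rewrite lerDl].
  by rewrite mulrC divfK // lt0r_neq0.
Qed.


Local Notation cj := Defs.conjmx.

Lemma cjE (g A : 'M[C]_N) : cj g A = g *m A *m invmx g.
Proof. by []. Qed.

Lemma cj_comp (q g A : 'M[C]_N) : q \in unitmx -> g \in unitmx ->
  cj q (cj g A) = cj (q *m g) A.
Proof. by move=> uq ug; rewrite !cjE invmx_mul // !mulmxA. Qed.

Lemma kr_unit (g : 'M[C]_N) (v0 : 'cV[C]_N) : g \in unitmx ->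
  (invmx g *m v0) ord_max 0 != 0 -> kr (cj g J) v0 \in unitmx.
Proof.
move=> ug H; rewrite cjE kr_conj // unitmx_mul ug unitmxE det_krJ unitfE.
exact: expf_neq0.
Qed.

Lemma iterN_cj (g : 'M[C]_N) (v0 : 'cV[C]_N) : g \in unitmx ->
  iter N (mulmx (cj g J)) v0 = 0.
Proof. by move=> ug; rewrite cjE iter_conj // iterJN mulmx0. Qed.

Lemma inP (v0 : 'cV[C]_N) (g k : 'M[C]_N) : g \in unitmx -> k \in unitmx ->
  (invmx g *m v0) ord_max 0 != 0 -> (invmx k *m v0) ord_max 0 != 0 ->
  P_orbit v0 (cj g J) (cj k J).
Proof.
move=> ug uk Hg Hk.
set X := cj g J; set B := cj k J.
have uKX := kr_unit ug Hg; have uKB := kr_unit uk Hk.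
set KX := kr X v0 in uKX *; set KB := kr B v0 in uKB *.
have eX : X *m KX = KX *m J by apply: kr_intertw; apply: iterN_cj.
have eB : B *m KB = KB *m J by apply: kr_intertw; apply: iterN_cj.
set p := KB *m invmx KX.
have up : p \in unitmx by rewrite unitmx_mul uKB unitmx_inv.
have pX : p *m X = B *m p.
  have E : invmx KX *m X = J *m invmx KX.
    apply: (can_inj (mulKmx uKX)); rewrite mulKVmx // mulmxA -eX mulmxK //.
  by rewrite /p -mulmxA E mulmxA -eB mulmxA.
exists p.
  split => //; rewrite /p -{1}(kr_last X v0) -/KX -mulmxA mulKmx //.
  exact: kr_last.
by rewrite cjE pX mulmxK.
Qed.

Lemma notin_of (v0 : 'cV[C]_N) (k : 'M[C]_N) : k \in unitmx ->
  (invmx k *m v0) ord_max 0 = 0 -> iter n (mulmx (cj k J)) v0 = 0.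
Proof.
move=> uk H; rewrite cjE iter_conj //.
have -> : iter n (mulmx J) (invmx k *m v0) = 0; last by rewrite mulmx0.
apply/matrixP => i j; rewrite (ord1 j) iterJ [RHS]mxE.
case: ifP => // Hi.
have Ei : (i + n = n)%N.
  move: Hi; move: (val i) => a; rewrite -plusE.
  move=> /ssrnat.ltP H1; clear -H1; lia.
by rewrite Ei -H -[ord_max]inord_val.
Qed.

Lemma in_of (v0 : 'cV[C]_N) (g A : 'M[C]_N) : g \in unitmx ->
  (invmx g *m v0) ord_max 0 != 0 -> P_orbit v0 (cj g J) A ->
  iter n (mulmx A) v0 != 0.
Proof.
move=> ug Hg [p [up pv] ->].
have pv' : invmx p *m v0 = v0 by rewrite -{1}pv mulKmx.
rewrite cj_comp // cjE iter_conj ?unitmx_mul ?up //.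
rewrite invmx_mul // -[invmx g *m invmx p *m v0]mulmxA pv'.
apply/eqP => H0.
have : iter n (mulmx J) (invmx g *m v0) = 0.
  by rewrite -[LHS](mulKmx (_ : p *m g \in unitmx)) ?H0 ?mulmx0 // unitmx_mul up.
move/matrixP => /(_ ord0 0); rewrite iterJ [RHS]mxE add0n ltnSn => E.
by move: Hg; rewrite -[ord_max]inord_val E eqxx.
Qed.


Lemma entry_lin (X Q1 Q2 : 'M[C]_N) (t s : C) i j :
  (X + t *: Q1 - s *: Q2) i j = X i j + t * Q1 i j - s * Q2 i j.
Proof. by rewrite !mxE. Qed.

Lemma term_le_sum (F : 'I_N -> 'I_N -> C) i j : (forall i j, 0 <= F i j) ->
  F i j <= \sum_i' \sum_j' F i' j'.
Proof.
move=> F0; rewrite (bigD1 i) //= (bigD1 j) //= -addrA ler_wpDr //.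
by rewrite addr_ge0 ?sumr_ge0 // => i' _; rewrite sumr_ge0.
Qed.

Lemma delta_w (w : 'cV[C]_N) (i0 : 'I_N) :
  delta_mx (ord_max : 'I_N) i0 *m w = w i0 0 *: delta_mx (ord_max : 'I_N) (0 : 'I_1).
Proof.
apply/matrixP => i j; rewrite (ord1 j) [RHS]mxE [X in _ = _ * X]mxE mxE.
rewrite (bigD1 i0) //= big1 ?addr0.
  by rewrite mxE eqxx andbT mulrC.
by move=> l Hl; rewrite mxE (negbTE Hl) andbF mul0r.
Qed.

Lemma inner_id (E : 'M[C]_N) (t : C) :
  (1%:M + t *: E) *m J *m (1%:M - t *: E) =
  J + t *: (E *m J - J *m E) - (t * t) *: (E *m J *m E).
Proof.
rewrite mulmxDl mul1mx -scalemxAl mulmxBr mulmx1 mulmxDl.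
rewrite -!scalemxAr -scalemxAl scalerA scalerBr opprD !addrA.
by rewrite -addrA [- _ + _]addrC addrA.
Qed.


Lemma entry_subZ m p (X Y : 'M[C]_(m, p)) t i j :
  (X - t *: Y) i j = X i j - t * Y i j.
Proof. by rewrite !mxE. Qed.

Lemma entry_Z m p (Y : 'M[C]_(m, p)) t i j : (t *: Y) i j = t * Y i j.
Proof. by rewrite !mxE. Qed.

Lemma expand3 (k K X A1 A2 : 'M[C]_N) (t s : C) :
  k *m (X + t *: A1 - s *: A2) *m K =
  k *m X *m K + t *: (k *m A1 *m K) - s *: (k *m A2 *m K).
Proof. by rewrite mulmxBr mulmxDr mulmxBl mulmxDl -!scalemxAr -!scalemxAl. Qed.

Lemma cyc_open (v0 : 'cV[C]_N) (g : 'M[C]_N) : g \in unitmx ->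
  (invmx g *m v0) ord_max 0 != 0 ->
  open_in (P_orbit v0 (cj g J)) (GL_orbit (cj g J)).
Proof.
move=> ug Hg; split.
  by move=> A [p [up _] ->]; exists p.
move=> A HA.
have := in_of ug Hg HA; case/matrix0Pn => i [j]; rewrite (ord1 j) => Ha.
have [L L0 HL] := lip_iter v0 n i A.
have a0 : 0 < `|iter n (mulmx A) v0 i 0| by rewrite normr_gt0.
have [d [d0 d1 Ld]] := pick_d L0 a0.
exists d => // B [q uq ->] Hc.
have uk : q *m g \in unitmx by rewrite unitmx_mul uq.
rewrite cj_comp // in Hc *; apply: inP => //.
apply/eqP => H0.
have := HL d _ d0 d1 Hc; rewrite (notin_of uk H0) mxE sub0r normrN => H1.
by move: (le_lt_trans H1 Ld); rewrite ltxx.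
Qed.

Lemma cyc_dense (v0 : 'cV[C]_N) (g : 'M[C]_N) : v0 != 0 -> g \in unitmx ->
  (invmx g *m v0) ord_max 0 != 0 ->
  dense_in (P_orbit v0 (cj g J)) (GL_orbit (cj g J)).
Proof.
move=> v00 ug Hg A [q uq ->] e e0.
have uk : q *m g \in unitmx by rewrite unitmx_mul uq.
rewrite cj_comp //; set k := q *m g in uk *.
set w := invmx k *m v0.
have [Hw|Hw] := eqVneq (w ord_max 0) 0; last first.
  exists (cj k J); first exact: inP.
  by move=> i j; rewrite subrr normr0.
have w0 : w != 0.
  apply: contra v00 => /eqP w0; apply/eqP.
  by rewrite -(mulKVmx uk v0) -/w w0 mulmx0.
case/matrix0Pn: w0 => i0 [j0]; rewrite (ord1 j0) => Hi0.
have i0n : i0 != ord_max by apply: contraNneq Hi0 => ->; rewrite Hw.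
pose E : 'M[C]_N := delta_mx (@ord_max n) i0.
have EE : E *m E = 0 by rewrite mul_delta_mx_0.
set Q1 := k *m (E *m J - J *m E) *m invmx k.
set Q2 := k *m (E *m J *m E) *m invmx k.
set S := \sum_i \sum_j (`|Q1 i j| + `|Q2 i j|).
have S0 : 0 <= S by rewrite sumr_ge0 // => i _; rewrite sumr_ge0 // => j _; rewrite addr_ge0.
have [t [t0 t1 tS]] := pick_d S0 e0.
set M := 1%:M + t *: E.
have MM : M *m (1%:M - t *: E) = 1%:M.
  rewrite mulmxBr mulmx1 mulmxDl mul1mx -!scalemxAl -scalemxAr EE.
  by rewrite !scaler0 addr0 addrK.
have uM : M \in unitmx := (mulmx1_unit MM).1.
have iM : invmx M = 1%:M - t *: E := inv_uniq uM MM.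
exists (cj (k *m M) J).
  apply: inP => //; first by rewrite unitmx_mul uk uM.
  rewrite invmx_mul // iM -mulmxA -/w mulmxBl mul1mx -scalemxAl delta_w.
  rewrite entry_subZ entry_Z Hw [delta_mx _ _ _ _]mxE !eqxx mulr1 sub0r.
  by rewrite oppr_eq0 mulf_neq0 // lt0r_neq0.
have Bexp : cj (k *m M) J = cj k J + t *: Q1 - (t * t) *: Q2.
  have -> : cj (k *m M) J = k *m (M *m J *m (1%:M - t *: E)) *m invmx k.
    by rewrite cjE invmx_mul // iM !mulmxA.
  by rewrite inner_id expand3.
move=> i j; rewrite Bexp entry_lin.
rewrite [X in `|X|]addrC addrA addKr.
apply: le_lt_trans tS.
apply: le_trans (ler_normD _ _) _; rewrite normrN !normrM.
have ht : `|t| = t by rewrite ger0_norm // ltW.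
rewrite ht.
apply: (@le_trans _ _ ((`|Q1 i j| + `|Q2 i j|) * t)).
  rewrite mulrDl [t * `|Q1 i j|]mulrC lerD2l [`|Q2 i j| * t]mulrC.
  apply: ler_wpM2r => //; by rewrite -[X in _ <= X]mulr1 ler_pM2l.
apply: ler_wpM2r; first exact: ltW.
have H := @term_le_sum (fun i j => `|Q1 i j| + `|Q2 i j|) i j.
by apply: H => i' j'; rewrite addr_ge0.
Qed.


Lemma JM (M : 'M[C]_N) (i k : 'I_N) :
  (J *m M) i k = if (i.+1 < N)%N then M (inord i.+1) k else 0.
Proof.
rewrite mxE.
case: ifP => Hi.
  rewrite (bigD1 (Ordinal Hi)) //= big1 ?addr0.
    by rewrite mxE /= eqxx mul1r -[Ordinal Hi]inord_val.
  move=> j Hj; rewrite mxE.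
  case: eqP => [Ej|]; last by rewrite mul0r.
  by case/eqP: Hj; apply: val_inj; rewrite /= Ej.
rewrite big1 // => j _; rewrite mxE.
case: eqP => [Ej|]; last by rewrite mul0r.
by move: (ltn_ord j); rewrite Ej Hi.
Qed.

Lemma max_index (u : 'cV[C]_N) : u != 0 ->
  exists m : 'I_N, u m 0 != 0 /\ forall i : 'I_N, (m < i)%N -> u i 0 = 0.
Proof.
case/matrix0Pn => i0 [j]; rewrite (ord1 j) => H.
case: (@arg_maxnP _ i0 (fun i => u i 0 != 0) (fun i => val i) H) => m Hm Hmax.
exists m; split => // i Hi; apply/eqP; apply: contraTT Hi => Hi.
by rewrite -leqNgt; exact: Hmax.
Qed.

Definition toep (u : 'cV[C]_N) (m : nat) : 'M[C]_N :=
  \matrix_(i, j) (if (i <= j)%N then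
     (if (j - i <= m)%N then u (inord (m - (j - i))) 0 else 0) else 0).

Lemma toep_comm u m : toep u m *m J = J *m toep u m.
Proof.
apply/matrixP => i k; rewrite MJ JM.
case: ifP => Hk; case: ifP => Hi => //.
- have H1 : (k.-1 < N)%N by rewrite (leq_ltn_trans (leq_pred _)).
  rewrite !mxE (inordK H1) (inordK Hi).
  have E1 : ((i <= k.-1)%N = (i.+1 <= k)%N).
    by move: Hk; move: (val k) (val i) => a b; case: a => //.
  have E2 : (k.-1 - i = k - i.+1)%N by rewrite -subn1 -subnDA add1n.
  by rewrite E1 E2.
- have H1 : (k.-1 < N)%N by rewrite (leq_ltn_trans (leq_pred _)).
  rewrite !mxE (inordK H1).
  have -> : (val i = n).
    apply/eqP; move: (ltn_ord i); rewrite ltnS leq_eqVlt => /orP[//|H].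
    by rewrite ltnS H in Hi.
  have -> : (n <= k.-1)%N = false.
    by apply/negbTE; rewrite -ltnNge (leq_trans _ (leq_ord k)) // ltn_predL.
  by [].
- rewrite !mxE (inordK Hi).
  have -> : (val k = 0)%N by apply/eqP; rewrite eqn0Ngt Hk.
  by [].
Qed.

Lemma toep_unit (u : 'cV[C]_N) (m : 'I_N) : u m 0 != 0 -> toep u m \in unitmx.
Proof.
move=> Hm; rewrite unitmxE -det_tr det_trig.
  rewrite unitfE.
  have -> : \prod_(i < N) (toep u m)^T i i = \prod_(i < N) u m 0.
    by apply: eq_bigr => i _; rewrite !mxE leqnn subnn leq0n subn0 inord_val.
  by rewrite prodr_const expf_neq0.
apply/is_trig_mxP => i j Hij; rewrite !mxE.
by rewrite leqNgt Hij.
Qed.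

Lemma toep_col (u : 'cV[C]_N) (m : 'I_N) : (forall i : 'I_N, (m < i)%N -> u i 0 = 0) ->
  toep u m *m delta_mx m 0 = u.
Proof.
move=> Hmax; rewrite -colE; apply/matrixP => i j; rewrite (ord1 j) !mxE.
case: ifP => Hi.
  rewrite leq_subr subKn // inord_val //.
by rewrite Hmax // ltnNge Hi.
Qed.


Definition Dm (m : nat) : 'M[C]_N := diag_mx (\row_(j < N) ((m < j)%N)%:R).

Lemma bracket_D (m m1 : 'I_N) : val m1 = m.+1 ->
  J *m Dm m - Dm m *m J = delta_mx m m1.
Proof.
move=> Hm1; rewrite /Dm mul_mx_diag mul_diag_mx; apply/matrixP => i j; rewrite !mxE.
have [Hj|Hj] := eqVneq (val j) i.+1.
  rewrite /= mulr1 mul1r.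
  case: (ltngtP m i) => Hmi.
  - have Hmi1 : (m < i.+1)%N by rewrite ltnS ltnW.
    rewrite Hj Hmi1 subrr; case: eqP => // Ei; move: Hmi; rewrite Ei ltnn.
    by [].
  - have Hmi1 : (m < i.+1)%N = false by apply/negbTE; rewrite -leqNgt.
    rewrite Hj Hmi1 subrr.
    by case: eqP => // Ei; move: Hmi; rewrite Ei ltnn.
  - have Ei : i = m by apply: val_inj.
    rewrite Hj Ei ltnSn eqxx /= subr0.
    by have -> : j == m1 by apply/eqP; apply: val_inj; rewrite /= Hj Ei Hm1.
rewrite /= mulr0 mul0r subrr.
case: eqP => // Ei; case: eqP => //= Ej.
by move: Hj; rewrite Ej Hm1 Ei eqxx.
Qed.

Lemma conjK (h D : 'M[C]_N) : h \in unitmx ->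
  cj (invmx h) (h *m D *m invmx h) = D.
Proof. by move=> uh; rewrite cjE invmxK !mulmxA mulVmx // mul1mx mulmxKV. Qed.

Lemma conj_br (h A B : 'M[C]_N) : h \in unitmx ->
  h *m A *m invmx h *m (h *m B *m invmx h) -
  h *m B *m invmx h *m (h *m A *m invmx h) = h *m (A *m B - B *m A) *m invmx h.
Proof. by move=> uh; rewrite mulmxBr mulmxBl !mulmxA !mulmxKV. Qed.

Lemma trace_rank1 (A h K : 'M[C]_N) (v0 x : 'cV[C]_N) (y : 'rV[C]_N) :
  A *m v0 = 0 -> h *m x = v0 -> \tr (A *m (h *m (x *m y) *m K)) = 0.
Proof.
move=> HA Hx; rewrite !mulmxA -(mulmxA A h x) Hx HA !mul0mx.
exact: mxtrace0.
Qed.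

Lemma noncyc (v0 : 'cV[C]_N) (g : 'M[C]_N) : v0 != 0 -> g \in unitmx ->
  (invmx g *m v0) ord_max 0 = 0 ->
  exists Y : 'M[C]_N,
    [/\ semisimple Y, ~ central Y & lie_p_perp v0 (lie_bracket (cj g J) Y)].
Proof.
move=> v00 ug Hu.
set u := invmx g *m v0.
have u0 : u != 0.
  apply: contra v00 => /eqP w0; apply/eqP.
  by rewrite -(mulKVmx ug v0) -/u w0 mulmx0.
have [m [Hm Hmax]] := max_index u0.
have mn : (m < n)%N.
  rewrite ltn_neqAle -ltnS ltn_ord andbT.
  apply/eqP => Em; move: Hm; have -> : m = ord_max by apply: val_inj.
  by rewrite -/u Hu eqxx.
pose m1 : 'I_N := Ordinal (mn : (m.+1 < N)%N).
set c := toep u m.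
have uc : c \in unitmx by apply: toep_unit.
have cJ : c *m J = J *m c by apply: toep_comm.
have cu : c *m delta_mx m 0 = u by apply: toep_col.
set h := g *m c.
have uh : h \in unitmx by rewrite unitmx_mul ug.
have Xh : cj g J = h *m J *m invmx h.
  rewrite cjE /h invmx_mul // !mulmxA -(mulmxA g c J) cJ mulmxA mulmxK //.
set D := Dm m.
exists (h *m D *m invmx h); split.
- exists (invmx h); first by rewrite unitmx_inv.
  by rewrite conjK //; exact: diag_mx_is_diag.
- case/is_scalar_mxP => a Ha.
  have HD : D = a%:M.
    have -> : D = invmx h *m (h *m D *m invmx h) *m h.
      by rewrite -{1}(conjK D uh) cjE invmxK.
    by rewrite Ha scalar_mxC -mulmxA mulVmx // mulmx1.
  have := congr1 (fun M : 'M[C]_N => M m m) HD; have := congr1 (fun M : 'M[C]_N => M m1 m1) HD.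
  rewrite /= /D /Dm !mxE /= ltnn ltnSn !eqxx /= !mulr1n => E1 E0.
  by move: (oner_neq0 C); rewrite E1 -E0 eqxx.
- move=> A HA.
  rewrite /lie_bracket Xh.
  rewrite conj_br //.
  rewrite (@bracket_D m m1) // -(mul_delta_mx (0 : 'I_1)).
  have hv : h *m delta_mx m 0 = v0 by rewrite /h -mulmxA cu /u mulKVmx.
  exact: trace_rank1 HA hv.
Qed.

End Jordan.

Theorem mainTheorem11 (C : numClosedFieldType) (n : nat)
    (v0 : 'cV[C]_n) (X : 'M[C]_n) :
  v0 != 0 ->
  regular_nilpotent X ->
  ~ (open_in (P_orbit v0 X) (GL_orbit X) /\ dense_in (P_orbit v0 X) (GL_orbit X)) ->
  exists Y : 'M[C]_n,
    [/\ semisimple Y, ~ central Y & lie_p_perp v0 (lie_bracket X Y)].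
Proof.
case: n v0 X => [|n] v0 X v00 [g ug ->] Hnd.
  by move: v00; rewrite [v0]flatmx0 eqxx.
have [H|H] := eqVneq ((invmx g *m v0) ord_max 0) 0.
  exact: noncyc.
exfalso; apply: Hnd; split; [exact: cyc_open | exact: cyc_dense].
Qed.
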